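(* Let $IS\in\{\Box,\blacksquare\}^2$ and let $\tau$ be a compositional translation from $\mathrm{SYNCSIMPLE}$ into $\mathrm{LOCKSIMPLE}_{2,IS}$ of blocking type $(P_1,P_2)$. Suppose $\tau(!)$ is a concatenation of blocks, each in $\{T_1,T_2\}^*P_1$ or $\{T_1,T_2\}^*P_2$, followed by a suffix in $\{T_1,T_2\}^*$, and $\tau(?)$ is a concatenation of blocks, each in $\{T_1,T_2\}^*P_1$ or $\{T_1,T_2\}^*P_2$. Then $\tau$ is not correct.
   Context: $\mathrm{SYNCSIMPLE}$: subprocesses $\mathcal{U} ::= \checkmark \mid 0 \mid\, !\mathcal{U} \mid\, ?\mathcal{U}$; processes are finite parallel compositions ($\mid$ associative, commutative, $0$ a unit). Reduction: $!\mathcal{U}_1\mid ?\mathcal{U}_2\mid \mathcal{P}\to \mathcal{U}_1\mid\mathcal{U}_2\mid\mathcal{P}$. Successful: of form $\checkmark\mid\mathcal{P}$; may-convergent: reduces to a successful process; must-convergent: every reachable process is may-convergent. $\mathrm{LOCKSIMPLE}_{k,IS}$ ($IS\in\{\Box,\blacksquare\}^k$, $\Box$ empty, $\blacksquare$ full): subprocesses are words over $\{P_1,T_1,\dots,P_k,T_k\}$ followed by $0$ or $\checkmark$; states $(\mathcal{P},C)$ reduce by $(P_i\mathcal{U}\mid\mathcal{P},C)\to(\mathcal{U}\mid\mathcal{P},C[C_i:=\blacksquare])$ only if $C_i=\Box$, and $(T_i\mathcal{U}\mid\mathcal{P},C)\to(\mathcal{U}\mid\mathcal{P},C[C_i:=\Box])$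 always. Success = process contains $\checkmark$; a process $\mathcal{P}$ is may/must-convergent iff the state $(\mathcal{P},IS)$ is. A compositional translation $\tau$ is given by words $\tau(!),\tau(?)$ with $\tau(0)=0$, $\tau(\checkmark)=\checkmark$, $\tau(!\mathcal{U})=\tau(!)\tau(\mathcal{U})$, $\tau(?\mathcal{U})=\tau(?)\tau(\mathcal{U})$, $\tau$ commuting with $\mid$; correct = preserves and reflects may- and must-convergence. Blocking type: for a word $S$, run $S$ as a single subprocess from $IS$; if it gets stuck at an occurrence of $P_i$ which is the first symbol from $\{P_i,T_i\}$ in $S$, the blocking type of $S$ is $P_i$ (if the stuck occurrence is not the first such symbol, the type is $P_iP_i$). $\tau$ has blocking type $(W_1,W_2)$ if $\tau(!)$ has type $W_1$ and $\tau(?)$ type $W_2$. For sets of symbols, $X^*$ denotes finite words over $X$ and juxtaposition denotes concatenation. *)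

(* Defs.v *)
From Stdlib Require Import List Permutation.
From mathcomp Require Import all_boot.

Set Implicit Arguments.
Unset Strict Implicit.
Unset Printing Implicit Defensive.

Inductive star (A : Type) (R : A -> A -> Prop) : A -> A -> Prop :=
| star_refl x : star R x x
| star_step x y z : R x y -> star R y z -> star R x z.

Inductive sproc : Type :=
| SCheck : sproc
| SZero : sproc
| SSend : sproc -> sproc
| SRecv : sproc -> sproc.

(* a process is a finite parallel composition, i.e. a list of subprocesses
   taken modulo permutation (| is associative and commutative). *)
Definition sprocess := seq sproc.

Inductive sstep : sprocess -> sprocess -> Prop :=
| sstep_intro (U1 U2 : sproc) (R P Q : sprocess) :
    Permutation P (SSend U1 :: SRecv U2 :: R) ->
    Permutation Q (U1 :: U2 :: R) ->
    sstep P Q.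

Definition ssuccessful (P : sprocess) : Prop := List.In SCheck P.

Definition smay (P : sprocess) : Prop :=
  exists Q, star sstep P Q /\ ssuccessful Q.

Definition smust (P : sprocess) : Prop :=
  forall Q, star sstep P Q -> smay Q.

(* lock symbols P_i, T_i for i : 'I_k (index i corresponds to P_{i+1}) *)
Inductive lsym (k : nat) : Type :=
| LP : 'I_k -> lsym k
| LT : 'I_k -> lsym k.

Definition lsym_idx k (s : lsym k) : 'I_k :=
  match s with LP i => i | LT i => i end.

Definition is_T k (s : lsym k) : bool :=
  match s with LT _ => true | LP _ => false end.

(* lock cells: Empty = box, Full = filled box *)
Inductive lock : Type := Empty | Full.

Definition lconf (k : nat) := 'I_k -> lock.

Definition upd (A : Type) k (C : 'I_k -> A) (i : 'I_k) (v : A) : 'I_k -> A :=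
  fun j => if j == i then v else C j.

(* a subprocess: a word over {P_i,T_i} followed by 0 (false) or check (true) *)
Definition lsub (k : nat) := (seq (lsym k) * bool)%type.
Definition lprocess (k : nat) := seq (lsub k).
Definition lstate (k : nat) := (lprocess k * lconf k)%type.

Inductive lstep (k : nat) : lstate k -> lstate k -> Prop :=
| lstep_P (i : 'I_k) (U : seq (lsym k)) (c : bool) (R P Q : lprocess k) (C : lconf k) :
    Permutation P ((LP i :: U, c) :: R) ->
    C i = Empty ->
    Permutation Q ((U, c) :: R) ->
    lstep (P, C) (Q, upd C i Full)
| lstep_T (i : 'I_k) (U : seq (lsym k)) (c : bool) (R P Q : lprocess k) (C : lconf k) :
    Permutation P ((LT i :: U, c) :: R) ->
    Permutation Q ((U, c) :: R) ->
    lstep (P, C) (Q, upd C i Empty).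

Definition lsuccessful k (S : lstate k) : Prop := List.In ([::], true) S.1.

Definition lmay k (S : lstate k) : Prop :=
  exists S', star (@lstep k) S S' /\ lsuccessful S'.

Definition lmust k (S : lstate k) : Prop :=
  forall S', star (@lstep k) S S' -> lmay S'.

(* tau given by the words w1 = tau(!) and w2 = tau(?) *)
Fixpoint tr k (w1 w2 : seq (lsym k)) (U : sproc) : lsub k :=
  match U with
  | SCheck => ([::], true)
  | SZero => ([::], false)
  | SSend U' => let r := tr w1 w2 U' in (w1 ++ r.1, r.2)
  | SRecv U' => let r := tr w1 w2 U' in (w2 ++ r.1, r.2)
  end.

Definition trP k (w1 w2 : seq (lsym k)) (P : sprocess) : lprocess k :=
  map (tr w1 w2) P.

Definition correct k (w1 w2 : seq (lsym k)) (IS : lconf k) : Prop :=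
  forall P : sprocess,
    (smay P <-> lmay (trP w1 w2 P, IS)) /\
    (smust P <-> lmust (trP w1 w2 P, IS)).

Inductive btype (k : nat) : Type :=
| BNone : btype k
| BP : 'I_k -> btype k         (* stuck at the first symbol of {P_i,T_i} *)
| BPP : 'I_k -> btype k.       (* stuck at a later P_i *)

(* run a word as a single subprocess; [seen i] records whether a symbol
   from {P_i,T_i} has already occurred *)
Fixpoint btype_run k (w : seq (lsym k)) (C : lconf k) (seen : 'I_k -> bool)
  : btype k :=
  match w with
  | [::] => BNone k
  | LP i :: w' =>
      match C i with
      | Full => if seen i then BPP i else BP i
      | Empty => btype_run w' (upd C i Full) (upd seen i true)
      end
  | LT i :: w' => btype_run w' (upd C i Empty) (upd seen i true)
  end.

Definition btype_of k (w : seq (lsym k)) (IS : lconf k) : btype k :=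
  btype_run w IS (fun _ => false).

Definition is_block k (b : seq (lsym k)) : Prop :=
  exists (ts : seq (lsym k)) (i : 'I_k), all (@is_T k) ts /\ b = rcons ts (LP i).

Definition blocks k (w : seq (lsym k)) : Prop :=
  exists bs : seq (seq (lsym k)), List.Forall (@is_block k) bs /\ w = flatten bs.

Definition blocks_then_Ts k (w : seq (lsym k)) : Prop :=
  exists (bs : seq (seq (lsym k))) (suf : seq (lsym k)),
    List.Forall (@is_block k) bs /\ all (@is_T k) suf /\ w = flatten bs ++ suf.

Definition idx1 : 'I_2 := @ord0 1.
Definition idx2 : 'I_2 := @ord_max 1.

(* Main.v *)
Require Import Defs.
From Stdlib Require Import List Permutation.
From mathcomp Require Import all_boot.

Set Implicit Arguments.
Unset Strict Implicit.

Section Gen.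
Variable k : nat.

Lemma star_trans (A : Type) (R : A -> A -> Prop) x y z :
  star R x y -> star R y z -> star R x z.
Proof. induction 1; intros; auto. eapply star_step; eauto. Qed.

Definition stepok (s : lsym k) (C D : lconf k) : Prop :=
  match s with
  | LP i => C i = Empty /\ D = upd C i Full
  | LT i => D = upd C i Empty
  end.

Lemma lstep_mid (L1 L2 : lprocess k) s U c C D :
  stepok s C D ->
  lstep (app L1 ((s :: U, c) :: L2), C) (app L1 ((U, c) :: L2), D).
Proof.
  destruct s as [i|i]; simpl.
  - intros [HC ->]. eapply lstep_P with (R := app L1 L2); eauto.
    + apply Permutation_sym, Permutation_middle.
    + apply Permutation_sym, Permutation_middle.
  - intros ->. eapply lstep_T with (R := app L1 L2).
    + apply Permutation_sym, Permutation_middle.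
    + apply Permutation_sym, Permutation_middle.
Qed.

Definition st2 := (seq (lsym k) * seq (lsym k) * lconf k)%type.

Inductive step2 : st2 -> st2 -> Prop :=
| s2A s a b C D : stepok s C D -> step2 (s :: a, b, C) (a, b, D)
| s2B s a b C D : stepok s C D -> step2 (a, s :: b, C) (a, b, D).

Lemma embed2 X Y : star step2 X Y -> forall L1 L3 fa fb,
  star (@lstep k) (app L1 ((X.1.1, fa) :: (X.1.2, fb) :: L3), X.2)
                  (app L1 ((Y.1.1, fa) :: (Y.1.2, fb) :: L3), Y.2).
Proof.
  induction 1 as [x|x y z Hxy Hyz IH]; intros L1 L3 fa fb.
  - apply star_refl.
  - eapply star_step; [|apply IH].
    destruct Hxy as [s a b C D H|s a b C D H]; simpl.
    + apply lstep_mid; auto.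
    + set p := (a, fa).
      change (p :: (s :: b, fb) :: L3) with (app (p :: nil) ((s :: b, fb) :: L3)).
      change (p :: (b, fb) :: L3) with (app (p :: nil) ((b, fb) :: L3)).
      rewrite -> !app_assoc.
      apply lstep_mid; auto.
Qed.

Lemma two_extract fa fb S S' : star (@lstep k) S S' -> forall a b,
  Permutation S.1 [:: (a, fa); (b, fb)] ->
  exists a' b', star step2 (a, b, S.2) (a', b', S'.2) /\
                Permutation S'.1 [:: (a', fa); (b', fb)].
Proof.
  induction 1 as [x|x y z Hxy Hyz IH]; intros a b Hp.
  - exists a, b; split; [apply star_refl|exact Hp].
  - destruct Hxy as [i U c R P Q C H1 HC H2|i U c R P Q C H1 H2]; simpl in *.
    + have Hp2 := Permutation_trans (Permutation_sym Hp) H1.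
      apply Permutation_length_2_inv in Hp2.
      destruct Hp2 as [E|E]; injection E; intros; subst.
      * destruct (IH U b H2) as [a' [b' [Hs Hq]]].
        exists a', b'; split; auto.
        eapply star_step; [|exact Hs]. apply s2A. simpl. auto.
      * destruct (IH a U) as [a' [b' [Hs Hq]]].
        { eapply Permutation_trans; [exact H2|].
          eapply Permutation_trans; [apply perm_swap|]. apply perm_skip. auto. }
        exists a', b'; split; auto.
        eapply star_step; [|exact Hs]. apply s2B. simpl. auto.
    + have Hp2 := Permutation_trans (Permutation_sym Hp) H1.
      apply Permutation_length_2_inv in Hp2.
      destruct Hp2 as [E|E]; injection E; intros; subst.
      * destruct (IH U b H2) as [a' [b' [Hs Hq]]].
        exists a', b'; split; auto.
        eapply star_step; [|exact Hs]. apply s2A. simpl. auto.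
      * destruct (IH a U) as [a' [b' [Hs Hq]]].
        { eapply Permutation_trans; [exact H2|].
          eapply Permutation_trans; [apply perm_swap|]. apply perm_skip. auto. }
        exists a', b'; split; auto.
        eapply star_step; [|exact Hs]. apply s2B. simpl. auto.
Qed.

Lemma last_step X Y : star step2 X Y -> Y.1.2 = [::] -> X.1.2 <> [::] ->
  exists a1 x C1 C2 pre, star step2 X (a1, [:: x], C1) /\ stepok x C1 C2 /\
     X.1.2 = rcons pre x.
Proof.
  induction 1 as [x|x y z Hxy Hyz IH]; intros HY HX.
  - congruence.
  - destruct (y.1.2) eqn:Ey.
    + destruct Hxy as [s a b C D H|s a b C D H]; simpl in *.
      * congruence.
      * subst b. exists a, s, C, D, [::]. split; [apply star_refl|]. auto.
    + destruct (IH HY ltac:(discriminate)) as [a1 [x0 [C1 [C2 [pre [Hs [Hok Hb]]]]]]].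
      rewrite -Ey in Hb.
      exists a1, x0, C1, C2.
      destruct Hxy as [s a b C D H|s a b C D H]; simpl in *.
      * exists pre. split; [eapply star_step; [apply s2A; exact H|exact Hs]|]. auto.
      * exists (s :: pre). split; [eapply star_step; [apply s2B; exact H|exact Hs]|].
        rewrite Hb. auto.
Qed.

Lemma replaceB X Y : star step2 X Y -> X.1.2 = [::] -> forall b,
  star step2 (X.1.1, b, X.2) (Y.1.1, b, Y.2).
Proof.
  induction 1 as [x|x y z Hxy Hyz IH]; intros HX b.
  - destruct x as [[? ?] ?]; apply star_refl.
  - destruct Hxy as [s a b0 C D H|s a b0 C D H]; simpl in *.
    + eapply star_step; [apply s2A; exact H|]. apply (IH HX b).
    + congruence.
Qed.

Definition le (C C' : lconf k) := forall i, C i = Empty -> C' i = Empty.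

Lemma le_upd (C C' : lconf k) i v : le C C' -> le (upd C i v) (upd C' i v).
Proof. intros H j; rewrite /upd; case: (j == i); auto. Qed.

Lemma stepok_mono s C C' D : le C C' -> stepok s C D ->
  exists D', stepok s C' D' /\ le D D'.
Proof.
  destruct s as [i|i]; simpl.
  - intros Hle [HC ->]. exists (upd C' i Full). split; [split; auto|]. apply le_upd; auto.
  - intros Hle ->. exists (upd C' i Empty). split; auto. apply le_upd; auto.
Qed.

Lemma mono2 X Y : star step2 X Y -> forall C', le X.2 C' ->
  exists D', le Y.2 D' /\ star step2 (X.1, C') (Y.1, D').
Proof.
  induction 1 as [x|x y z Hxy Hyz IH]; intros C' Hle.
  - exists C'; split; auto. apply star_refl.
  - destruct Hxy as [s a b C D H|s a b C D H]; simpl in *.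
    + destruct (stepok_mono Hle H) as [D' [H' Hle']].
      destruct (IH D' Hle') as [E [HE Hs]]. exists E; split; auto.
      eapply star_step; [apply s2A; exact H'|exact Hs].
    + destruct (stepok_mono Hle H) as [D' [H' Hle']].
      destruct (IH D' Hle') as [E [HE Hs]]. exists E; split; auto.
      eapply star_step; [apply s2B; exact H'|exact Hs].
Qed.

End Gen.

Definition shape (x : sproc) : Prop :=
  match x with
  | SCheck | SZero => True
  | SSend y | SRecv y => y = SCheck \/ y = SZero
  end.
Definition issend (x : sproc) : bool := if x is SSend _ then true else false.
Definition isrecv (x : sproc) : bool := if x is SRecv _ then true else false.

Lemma perm_count (p : sproc -> bool) (l l' : seq sproc) :
  Permutation l l' -> count p l = count p l'.
Proof.
  induction 1 as [|x l l' _ IH|x y l|l l' l'' _ IH1 _ IH2].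
  - by [].
  - by rewrite /= IH.
  - by rewrite /= !addnA (addnC (p x)).
  - congruence.
Qed.

Definition good (P : sprocess) : Prop :=
  (forall x, In x P -> shape x) /\ count issend P = count isrecv P /\
  (In SCheck P \/ In (SSend SCheck) P \/ In (SRecv SCheck) P).

Lemma good_step P Q : sstep P Q -> good P -> good Q.
Proof.
  intros [U1 U2 R P0 Q0 H1 H2] [Hs [Hc Hk]].
  have HinP : forall x, In x (SSend U1 :: SRecv U2 :: R) -> In x P0.
  { intros x Hx. eapply Permutation_in; [apply Permutation_sym; exact H1|exact Hx]. }
  have HU1 : U1 = SCheck \/ U1 = SZero.
  { apply (Hs (SSend U1)). apply HinP. simpl; auto. }
  have HU2 : U2 = SCheck \/ U2 = SZero.
  { apply (Hs (SRecv U2)). apply HinP. simpl; auto. }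
  split; [|split].
  - intros x Hx. have Hx' : In x (U1 :: U2 :: R).
    { eapply Permutation_in; [exact H2|exact Hx]. }
    destruct Hx' as [<-|[<-|Hx']].
    + destruct HU1 as [->| ->]; simpl; auto.
    + destruct HU2 as [->| ->]; simpl; auto.
    + apply Hs, HinP. simpl; auto.
  - rewrite (perm_count issend H2) (perm_count isrecv H2).
    rewrite (perm_count issend H1) (perm_count isrecv H1) in Hc.
    destruct HU1 as [->| ->]; destruct HU2 as [->| ->]; simpl in *;
      rewrite ?add0n ?add1n in Hc |- *; injection Hc; auto.
  - have HQ : forall x, In x (U1 :: U2 :: R) -> In x Q0.
    { intros x Hx. eapply Permutation_in; [apply Permutation_sym; exact H2|exact Hx]. }
    have HP : forall x, In x P0 -> In x (SSend U1 :: SRecv U2 :: R).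
    { intros x Hx. eapply Permutation_in; [exact H1|exact Hx]. }
    destruct Hk as [Hk|[Hk|Hk]]; apply HP in Hk; simpl in Hk.
    + left. apply HQ. destruct Hk as [Hk|[Hk|Hk]]; try discriminate. simpl; auto.
    + destruct Hk as [Hk|[Hk|Hk]].
      * injection Hk; intros <-. left. apply HQ. simpl; auto.
      * discriminate.
      * right; left. apply HQ. simpl; auto.
    + destruct Hk as [Hk|[Hk|Hk]].
      * discriminate.
      * injection Hk; intros <-. left. apply HQ. simpl; auto.
      * right; right. apply HQ. simpl; auto.
Qed.

Lemma count_pos_recv l : 0 < count isrecv l -> exists y, In (SRecv y) l.
Proof.
  induction l as [|a l IH]; simpl; [discriminate|].
  destruct a; simpl; intros H; try (destruct (IH H) as [y Hy]; exists y; auto).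
  exists a; auto.
Qed.

Lemma count_pos_send l : 0 < count issend l -> exists y, In (SSend y) l.
Proof.
  induction l as [|a l IH]; simpl; [discriminate|].
  destruct a; simpl; intros H; try (destruct (IH H) as [y Hy]; exists y; auto).
  exists a; auto.
Qed.

Lemma count_pos_of (p : sproc -> bool) x l : In x l -> p x -> 0 < count p l.
Proof.
  induction l as [|a l IH]; simpl; [tauto|].
  intros [<-|H] Hp; [rewrite Hp; auto|].
  have := IH H Hp. case: (p a); simpl; auto.
Qed.

Lemma in_two (A : Type) (a b : A) l : In a l -> In b l -> a <> b ->
  exists R, Permutation l (a :: b :: R).
Proof.
  intros Ha Hb Hab.
  destruct (in_split _ _ Ha) as [l1 [l2 ->]].
  have Hb' : In b (app l1 l2).
  { apply in_app_or in Hb. apply in_or_app. destruct Hb as [Hb|[Hb|Hb]]; auto. congruence. }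
  destruct (in_split _ _ Hb') as [m1 [m2 Hm]].
  exists (app m1 m2).
  eapply Permutation_trans; [apply Permutation_sym, Permutation_middle|].
  apply perm_skip. rewrite Hm. apply Permutation_sym, Permutation_middle.
Qed.

Lemma good_may P : good P -> smay P.
Proof.
  intros [Hs [Hc Hk]].
  destruct Hk as [Hk|[Hk|Hk]].
  - exists P; split; [apply star_refl|exact Hk].
  - have Hp := @count_pos_of issend _ _ Hk erefl. rewrite Hc in Hp.
    destruct (count_pos_recv Hp) as [y Hy].
    destruct (in_two Hk Hy) as [R HR]; [discriminate|].
    exists (SCheck :: y :: R); split; last by rewrite /ssuccessful /=; auto.
    eapply star_step; [|apply star_refl]. eapply sstep_intro; [exact HR|apply Permutation_refl].
  - have Hp := @count_pos_of isrecv _ _ Hk erefl. rewrite -Hc in Hp.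
    destruct (count_pos_send Hp) as [y Hy].
    destruct (in_two Hy Hk) as [R HR]; [discriminate|].
    exists (y :: SCheck :: R); split; last by rewrite /ssuccessful /=; auto.
    eapply star_step; [|apply star_refl]. eapply sstep_intro; [exact HR|apply Permutation_refl].
Qed.

Lemma good_must P : good P -> smust P.
Proof.
  intros HG Q HQ. induction HQ; auto using good_may.
  apply IHHQ. eapply good_step; eauto.
Qed.

Lemma btype_BP k (w : seq (lsym k)) : forall C seen i,
  btype_run w C seen = BP i -> seen i = false /\ C i = Full.
Proof.
  induction w as [|s w IH]; intros C seen i H; simpl in H; [discriminate|].
  destruct s as [j|j].
  - destruct (C j) eqn:E.
    + destruct (IH _ _ _ H) as [H1 H2]. move: H1 H2; rewrite /upd.
      case: (i == j); [discriminate|auto].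
    + destruct (seen j) eqn:E2; [discriminate|]. injection H; intros <-; auto.
  - destruct (IH _ _ _ H) as [H1 H2]. move: H1 H2; rewrite /upd.
    case: (i == j); [discriminate|auto].
Qed.

Lemma Forall_cons_inv (A : Type) (P : A -> Prop) x l : List.Forall P (x :: l) -> P x /\ List.Forall P l.
Proof. intros H; inversion H; auto. Qed.

Lemma blocks_last k (bs : seq (seq (lsym k))) : List.Forall (@is_block k) bs ->
  flatten bs <> [::] -> exists pre j, flatten bs = rcons pre (LP j).
Proof.
  induction bs as [|b bs IH]; intros HF Hne; [simpl in Hne; congruence|].
  destruct (Forall_cons_inv HF) as [[ts [i [_ ->]]] HF'].
  simpl. destruct (flatten bs) as [|h t] eqn:E.
  - exists ts, i. by rewrite cats0.
  - destruct (IH HF' ltac:(discriminate)) as [pre [j Hj]].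
    exists (rcons ts (LP i) ++ pre), j. by rewrite Hj rcons_cat.
Qed.

Lemma dead_star k (j : 'I_k) S S' : star (@lstep k) S S' ->
  (forall z, In z S.1 -> z.1 = [::] \/ z.1 = [:: LP j]) -> S.2 j = Full -> S' = S.
Proof.
  intros H. destruct H as [x|x y z Hxy _]; auto.
  intros Hz Hj. exfalso.
  destruct Hxy as [i U c R P Q C H1 HC H2|i U c R P Q C H1 H2]; simpl in *.
  - have Hin : In (LP i :: U, c) P.
    { eapply Permutation_in; [apply Permutation_sym; exact H1|left; auto]. }
    destruct (Hz _ Hin) as [E|E]; simpl in E; [discriminate|].
    injection E; intros _ ->. congruence.
  - have Hin : In (LT i :: U, c) P.
    { eapply Permutation_in; [apply Permutation_sym; exact H1|left; auto]. }
    destruct (Hz _ Hin) as [E|E]; simpl in E; discriminate.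
Qed.

Theorem proposition5p13 (IS : lconf 2) (w1 w2 : seq (lsym 2)) :
  btype_of w1 IS = BP idx1 ->
  btype_of w2 IS = BP idx2 ->
  blocks_then_Ts w1 ->
  blocks w2 ->
  ~ correct w1 w2 IS.
Proof.
  intros Hb1 Hb2 _ Hbl Hcor.
  have [_ HI1] := btype_BP Hb1.
  have [_ HI2] := btype_BP Hb2.
  have Hfull : forall i, IS i = Full.
  { case => [[|[|m]] Hm].
    - have -> : Ordinal Hm = idx1 by apply/val_inj. exact HI1.
    - have -> : Ordinal Hm = idx2 by apply/val_inj. exact HI2.
    - discriminate. }
  have Hle0 : forall C, le IS C.
  { intros C i; rewrite Hfull; discriminate. }
  have Hw2ne : w2 <> [::].
  { intros E; rewrite E in Hb2; discriminate. }
  destruct Hbl as [bs [HF Hw2]].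
  destruct (@blocks_last 2 bs HF ltac:(rewrite -Hw2; exact Hw2ne)) as [pre [j Hj]].
  rewrite -Hw2 in Hj.
  have HZ := proj1 (proj1 (Hcor [:: SSend SZero; SRecv SCheck])).
  have smZ : smay [:: SSend SZero; SRecv SCheck].
  { exists [:: SZero; SCheck]. split; last by rewrite /ssuccessful /=; auto.
    eapply star_step; [|apply star_refl].
    eapply (@sstep_intro SZero SCheck [::]); apply Permutation_refl. }
  have {HZ smZ} HZ := HZ smZ.
  rewrite /trP /= !cats0 in HZ.
  destruct HZ as [S [HS HSs]].
  destruct (two_extract HS (a := w1) (b := w2) (Permutation_refl _)) as [a' [b' [Hs2 Hp2]]].
  have Eb' : b' = [::].
  { have := Permutation_in _ Hp2 HSs. simpl. intros [E|[E|[]]]; congruence. }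
  subst b'.
  destruct (last_step Hs2 erefl Hw2ne) as [a1 [x [C1 [C2 [pre' [Hs1 [Hok Hx]]]]]]].
  simpl in Hx, Hs1.
  have Ex : x = LP j.
  { have := f_equal (last (LP j)) Hx. rewrite Hj !last_rcons. auto. }
  subst x. destruct Hok as [HC1 HC2].
  have Hrun1 : star (@step2 2) (w1, w2, IS) (a1, [::], C2).
  { eapply star_trans; [exact Hs1|]. eapply star_step; [|apply star_refl].
    apply s2B. simpl. auto. }
  have smX : smust [:: SSend SCheck; SRecv SZero].
  { apply good_must. split; [|split].
    - intros z Hz; simpl in Hz; destruct Hz as [<-|[<-|[]]]; simpl; auto.
    - by [].
    - right; left; simpl; auto. }
  have HX := proj1 (proj2 (Hcor [:: SSend SCheck; SRecv SZero])) smX.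
  rewrite /trP /= !cats0 in HX.
  have Hreach := embed2 Hrun1 [::] [::] true false. simpl in Hreach.
  destruct (HX _ Hreach) as [S' [HS' HS's]].
  destruct (two_extract HS' (a := a1) (b := [::]) (Permutation_refl _)) as [a'' [b'' [Hs3 Hp3]]].
  have Ea'' : a'' = [::].
  { have := Permutation_in _ Hp3 HS's. simpl. intros [E|[E|[]]]; congruence. }
  subst a''.
  have Hs4 := replaceB Hs3 erefl [:: LP j]. simpl in Hs4.
  have HleC : le C2 C1.
  { intros i; rewrite HC2 /upd. case: (i == j); [discriminate|auto]. }
  destruct (mono2 Hs4 HleC) as [E1 [_ Hs5]]. simpl in Hs5.
  have H : star (@step2 2) (w1, w2, IS) ([::], [:: LP j], E1) := star_trans Hs1 Hs5.
  destruct (mono2 H (Hle0 E1)) as [E2 [_ H']]. simpl in H'.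
  set P4 := [:: SSend SZero; SRecv SCheck; SSend SZero; SRecv SZero].
  have smM : smust P4.
  { apply good_must. split; [|split].
    - intros z Hz; simpl in Hz; destruct Hz as [<-|[<-|[<-|[<-|[]]]]]; simpl; auto.
    - by [].
    - right; right; simpl; auto. }
  have HM := proj1 (proj2 (Hcor P4)) smM.
  rewrite /trP /P4 /= !cats0 in HM.
  have R1 := embed2 H [::] [:: (w1, false); (w2, false)] false true. simpl in R1.
  have R2 := embed2 H' [:: ([::], false); ([:: LP j], true)] [::] false false. simpl in R2.
  have R12 := star_trans R1 R2.
  have Fin : exists F Cf, star (@lstep 2) ([:: (w1, false); (w2, true); (w1, false); (w2, false)], IS) (F, Cf)
     /\ (forall z, In z F -> z.1 = [::] \/ z.1 = [:: LP j]) /\ Cf j = Full /\ ~ In ([::], true) F.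
  { destruct (E2 j) eqn:EE.
    - exists [:: ([::], false); ([:: LP j], true); ([::], false); ([::], false)], (upd E2 j Full).
      split; [|split; [|split]].
      + eapply star_trans; [exact R12|]. eapply star_step; [|apply star_refl].
        apply (@lstep_mid 2 [:: ([::], false); ([:: LP j], true); ([::], false)] [::] (LP j) [::] false).
        simpl; auto.
      + intros z Hz; simpl in Hz; destruct Hz as [<-|[<-|[<-|[<-|[]]]]]; simpl; auto.
      + by rewrite /upd eqxx.
      + simpl. intros [E|[E|[E|[E|[]]]]]; discriminate.
    - exists [:: ([::], false); ([:: LP j], true); ([::], false); ([:: LP j], false)], E2.
      split; [exact R12|split; [|split]].
      + intros z Hz; simpl in Hz; destruct Hz as [<-|[<-|[<-|[<-|[]]]]]; simpl; auto.
      + exact EE.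
      + simpl. intros [E|[E|[E|[E|[]]]]]; discriminate. }
  destruct Fin as [F [Cf [HR [Hz [Hj' Hns]]]]].
  destruct (HM _ HR) as [S'' [HS'' HS''s]].
  have := dead_star HS'' Hz Hj'. intros ->. apply Hns. exact HS''s.
Qed.
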